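(* Let $n \ge s \ge 1$ be integers and let $p$ be an odd prime. Let \[ F_p(x) = \sum_{k=0}^{s-1} \binom{n}{k+1} G_{k+1}\, p^k\, x^{s-1-k} \in \mathbf{Z}[x]. \] Then \[ G_n \equiv \sum_{j=0}^{p-1} (-1)^j j^{n-s} F_p(j) \pmod{p^s}. \]
   Context: The Bernoulli numbers $B_k$ are defined by $\frac{t}{e^t-1} = \sum_{k\ge 0} \frac{B_k}{k!} t^k$. The Genocchi numbers are $G_k = 2(1-2^k)B_k$; they are integers. Here $0^0 = 1$. *)

(* Defs.v *)
From HB Require Import structures.
From mathcomp Require Import all_boot all_order all_algebra.
Set Implicit Arguments. Unset Strict Implicit. Unset Printing Implicit Defensive.
Import Order.TTheory GRing.Theory Num.Theory.
Local Open Scope ring_scope.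

(* bern_list m = [:: B_0; ...; B_m], Bernoulli numbers with B_1 = -1/2
   (the convention of t/(e^t-1)), via the standard recurrence
   B_0 = 1,  sum_{k=0}^{m} C(m+1,k) B_k = 0  for m >= 1. *)
Fixpoint bern_list (m : nat) : seq rat :=
  match m with
  | 0 => [:: 1]
  | m'.+1 =>
      let l := bern_list m' in
      rcons l (- (\sum_(k < m'.+1) ('C(m'.+2, k))%:R * l`_k) / (m'.+2)%:R)
  end.

Definition bernoulli (n : nat) : rat := (bern_list n)`_n.

(* Genocchi numbers G_k = 2 (1 - 2^k) B_k (rational-valued here; they are integers). *)
Definition genocchi (k : nat) : rat := 2 * (1 - 2 ^+ k) * bernoulli k.

Definition Fp (n s p : nat) (x : rat) : rat :=
  \sum_(k < s) ('C(n, k.+1))%:R * genocchi k.+1 * (p%:R) ^+ k * x ^+ (s - 1 - k).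

(* Main.v *)
Require Import Defs.
From HB Require Import structures.
From mathcomp Require Import all_boot all_order all_algebra.
From Stdlib Require Import FunctionalExtensionality.
From mathcomp Require Import ring lra zify.
From Stdlib Require Import Lia.
Import Order.TTheory GRing.Theory Num.Theory.
Local Open Scope ring_scope.

Definition cv (a b : nat -> rat) (n : nat) : rat :=
  \sum_(k < n.+1) ('C(n, k))%:R * a k * b (n - k)%N.

Lemma fact_neq0 k : (k`!)%:R != 0 :> rat.
Proof. by rewrite pnatr_eq0 -lt0n fact_gt0. Qed.

Lemma coefM_cv (P Q : {poly rat}) a b n :
  (forall k, (k <= n)%N -> P`_k = a k / (k`!)%:R) ->
  (forall k, (k <= n)%N -> Q`_k = b k / (k`!)%:R) ->
  (P * Q)`_n = cv a b n / (n`!)%:R.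
Proof.
move=> HP HQ; rewrite coefM /cv mulr_suml; apply: eq_bigr => [[k hk]] _ /=.
have hkn : (k <= n)%N by [].
rewrite HP // HQ ?leq_subr //.
rewrite -(bin_fact hkn) !natrM.
have h1 := fact_neq0 k; have h2 := fact_neq0 (n - k).
have h3 : ('C(n, k))%:R != 0 :> rat by rewrite pnatr_eq0 -lt0n bin_gt0.
by field; rewrite h1 h2 h3.
Qed.

Definition ps (a : nat -> rat) N : {poly rat} := \poly_(i < N) (a i / (i`!)%:R).

Lemma coef_ps a N k : (k < N)%N -> (ps a N)`_k = a k / (k`!)%:R.
Proof. by move=> h; rewrite coef_poly h. Qed.


Lemma ps_ok a n k : (k <= n)%N -> (ps a n.+1)`_k = a k / (k`!)%:R.
Proof. by move=> h; rewrite coef_ps. Qed.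

Lemma cancel_fact n (x y : rat) : x / (n`!)%:R = y / (n`!)%:R -> x = y.
Proof. by apply: mulIf; rewrite invr_eq0 fact_neq0. Qed.

Lemma psM a b n : (ps a n.+1 * ps b n.+1)`_n = cv a b n / (n`!)%:R.
Proof. by apply: coefM_cv => k hk; rewrite ps_ok. Qed.

Lemma cvC a b n : cv a b n = cv b a n.
Proof. by apply: (@cancel_fact n); rewrite -!psM mulrC. Qed.

Lemma cvA a b c n : cv (cv a b) c n = cv a (cv b c) n.
Proof.
apply: (@cancel_fact n).
have hab : forall k, (k <= n)%N -> (ps a n.+1 * ps b n.+1)`_k = cv a b k / (k`!)%:R.
  move=> k hk; apply: coefM_cv => j hj; rewrite ps_ok //; exact: leq_trans hk.
have hbc : forall k, (k <= n)%N -> (ps b n.+1 * ps c n.+1)`_k = cv b c k / (k`!)%:R.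
  move=> k hk; apply: coefM_cv => j hj; rewrite ps_ok //; exact: leq_trans hk.
rewrite -(@coefM_cv (ps a n.+1 * ps b n.+1) (ps c n.+1) (cv a b) c n hab); last by move=> k hk; rewrite ps_ok.
rewrite -(@coefM_cv (ps a n.+1) (ps b n.+1 * ps c n.+1) a (cv b c) n _ hbc); last by move=> k hk; rewrite ps_ok.
by rewrite mulrA.
Qed.

Definition dl (n : nat) : rat := (n == 0)%:R.
Definition t1 (n : nat) : rat := (n == 1)%:R.
Definition geo (x : rat) (n : nat) : rat := x ^+ n.
Definition sc (m : rat) (a : nat -> rat) (n : nat) : rat := m ^+ n * a n.

Lemma cv_ext a a' b b' n : (forall i, a i = a' i) -> (forall i, b i = b' i) ->
  cv a b n = cv a' b' n.
Proof. by move=> ha hb; apply: eq_bigr => k _; rewrite ha hb. Qed.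

Lemma cvDl a b c n : cv (fun i => a i + b i) c n = cv a c n + cv b c n.
Proof. by rewrite /cv -big_split; apply: eq_bigr => k _ /=; ring. Qed.

Lemma cvBl a b c n : cv (fun i => a i - b i) c n = cv a c n - cv b c n.
Proof. by rewrite /cv -sumrB; apply: eq_bigr => k _ /=; ring. Qed.

Lemma cvZl r a c n : cv (fun i => r * a i) c n = r * cv a c n.
Proof. by rewrite /cv mulr_sumr; apply: eq_bigr => k _ /=; ring. Qed.

Lemma cvDr a b c n : cv c (fun i => a i + b i) n = cv c a n + cv c b n.
Proof. by rewrite cvC cvDl cvC [cv b _ _]cvC. Qed.

Lemma cvBr a b c n : cv c (fun i => a i - b i) n = cv c a n - cv c b n.
Proof. by rewrite cvC cvBl cvC [cv b _ _]cvC. Qed.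

Lemma cvZr r a c n : cv c (fun i => r * a i) n = r * cv c a n.
Proof. by rewrite cvC cvZl cvC. Qed.

Lemma cv_dl a n : cv a dl n = a n.
Proof.
rewrite /cv big_ord_recr /= subnn /dl /= binn mulr1 mul1r big1 ?add0r // => k _.
by rewrite subn_eq0 leqNgt ltn_ord /= mulr0.
Qed.

Lemma cv_geo x y n : cv (geo x) (geo y) n = geo (x + y) n.
Proof.
rewrite /cv /geo addrC exprDn; apply: eq_bigr => k _.
by rewrite -mulr_natl; ring.
Qed.

Lemma cv_sc m a b n : cv (sc m a) (sc m b) n = m ^+ n * cv a b n.
Proof.
rewrite /cv /sc mulr_sumr; apply: eq_bigr => [[k hk]] _ /=.
have -> : m ^+ n = m ^+ k * m ^+ (n - k) by rewrite -exprD subnKC.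
ring.
Qed.

Lemma cv1 a n : cv a (fun _ => 1) n = \sum_(k < n) ('C(n, k))%:R * a k + a n.
Proof.
rewrite /cv big_ord_recr /= binn mulr1 mul1r; congr (_ + _).
by apply: eq_bigr => k _; rewrite mulr1.
Qed.

Lemma cancel_p a : (forall n, cv a (fun i => 1 + dl i) n = 0) -> forall n, a n = 0.
Proof.
move=> H; elim/ltn_ind => n IH.
move: (H n); rewrite cvDr cv_dl cv1 big1 ?add0r; last first.
  by move=> [k hk] _ /=; rewrite IH // mulr0.
by move/eqP; rewrite -mulr2n mulrn_eq0 /= => /eqP.
Qed.

Lemma cancel_m a : (forall n, cv a (fun i => 1 - dl i) n = 0) -> forall n, a n = 0.
Proof.
move=> H; elim/ltn_ind => n IH.
move: (H n.+1); rewrite cvBr cv_dl cv1 addrK big_ord_recr /= binSn big1 ?add0r; last first.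
  by move=> [k hk] _ /=; rewrite IH // mulr0.
by move/eqP; rewrite mulf_eq0 pnatr_eq0 /= => /eqP.
Qed.

Lemma size_bern m : size (bern_list m) = m.+1.
Proof. by elim: m => [|m IH] //=; rewrite size_rcons IH. Qed.

Lemma bern_step m k : (k <= m)%N -> (bern_list m.+1)`_k = (bern_list m)`_k.
Proof. by move=> hk; rewrite /= nth_rcons size_bern ltnS hk. Qed.

Lemma bern_stable m k : (k <= m)%N -> (bern_list m)`_k = bernoulli k.
Proof.
move=> hk; rewrite /bernoulli; elim: m hk => [|m IH] hk.
  by move: hk; rewrite leqn0 => /eqP ->.
case: (ltnP k m.+1) => h.
  by rewrite bern_step // IH.
by have -> : k = m.+1 by apply/eqP; rewrite eqn_leq hk h.
Qed.

Lemma bern0 : bernoulli 0 = 1.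
Proof. by []. Qed.

Lemma bern_rec m : \sum_(k < m.+2) ('C(m.+2, k))%:R * bernoulli k = 0.
Proof.
rewrite big_ord_recr /= binSn.
have -> : bernoulli m.+1 = - (\sum_(k < m.+1) ('C(m.+2, k))%:R * (bern_list m)`_k) / (m.+2)%:R.
  by rewrite /bernoulli /= nth_rcons size_bern ltnn eqxx.
rewrite (eq_bigr (fun k : 'I_m.+1 => ('C(m.+2, k))%:R * (bern_list m)`_k)); last first.
  by move=> [k hk] _ /=; rewrite bern_stable.
have hm : (m.+2)%:R != 0 :> rat by rewrite pnatr_eq0.
by rewrite mulrC divfK // addrN.
Qed.

Lemma bcv n : cv bernoulli (fun _ => 1) n = bernoulli n + t1 n.
Proof.
rewrite cv1; case: n => [|[|m]].
- by rewrite big_ord0 /t1 /= add0r addr0.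
- by rewrite big_ord1 /t1 /= bern0 mulr1 addrC.
- by rewrite bern_rec /t1 /= add0r addr0.
Qed.

Lemma cv11 n : cv (fun _ => 1) (fun _ => 1) n = 2 ^+ n.
Proof.
rewrite (@cv_ext _ (geo 1) _ (geo 1)).
- by rewrite cv_geo /geo.
- by move=> i; rewrite /geo expr1n.
- by move=> i; rewrite /geo expr1n.
Qed.

Lemma cvpm n : cv (fun i => 1 + dl i) (fun i => 1 - dl i) n = 2 ^+ n - dl n.
Proof.
rewrite cvBr cv_dl cvDl cv11 cvC cv_dl /dl; ring.
Qed.

Lemma dup n : cv (sc 2 bernoulli) (fun i => 1 + dl i) n = 2 * bernoulli n.
Proof.
apply/eqP; rewrite -subr_eq0; apply/eqP; move: n.
apply: cancel_m => n.
rewrite cvBl cvA (@cv_ext _ (sc 2 bernoulli) _ (sc 2 (fun i => 1 - dl i))); last 2 first.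
- by [].
- move=> i; rewrite cvpm /sc /dl; case: i => [|i] //=; rewrite ?expr0; ring.
rewrite cv_sc cvZl cvBr cv_dl bcv /t1; case: n => [|[|n]] /=; ring.
Qed.

Lemma gcv n : cv genocchi (fun i => 1 + dl i) n = 2 * t1 n.
Proof.
rewrite (@cv_ext _ (fun i => 2 * bernoulli i - 2 * sc 2 bernoulli i) _ (fun i => 1 + dl i)); last 2 first.
- by move=> i; rewrite /genocchi /sc; ring.
- by [].
rewrite cvBl !cvZl dup cvDr cv_dl bcv; ring.
Qed.

Definition Sm (m : nat) (r : nat) : rat := \sum_(j < m) (-1) ^+ j * (j%:R) ^+ r.

Lemma Scv1 m n : cv (Sm m) (fun _ => 1) n = \sum_(j < m) (-1) ^+ j * (j.+1%:R) ^+ n.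
Proof.
rewrite /cv /Sm.
rewrite (eq_bigr (fun k : 'I_n.+1 => \sum_(j < m) ('C(n, k))%:R * ((-1) ^+ j * (j%:R) ^+ k))); last first.
  by move=> k _; rewrite mulr1 mulr_sumr.
rewrite exchange_big /=; apply: eq_bigr => j _.
rewrite -[j.+1]addn1 natrD exprD1n mulr_sumr; apply: eq_bigr => k _.
by rewrite mulr_natl -mulrnAr.
Qed.

Lemma Scv m n : odd m -> cv (Sm m) (fun i => 1 + dl i) n = (m%:R) ^+ n + dl n.
Proof.
move=> hm; rewrite cvDr cv_dl Scv1 /Sm -big_split /=.
pose f := fun j : nat => (-1) ^+ j * (j%:R : rat) ^+ n.
rewrite (eq_bigr (fun j : 'I_m => - (f j.+1 - f j))); last first.
  by move=> j _; rewrite /f exprS; ring.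
rewrite sumrN -(big_mkord xpredT (fun j => f j.+1 - f j)) telescope_sumr // /f.
rewrite -signr_odd hm expr0 mul1r /dl expr0n; ring.
Qed.

Lemma F2 m n : odd m -> (m%:R : rat) * genocchi n = cv (sc m%:R genocchi) (Sm m) n.
Proof.
move=> hm; apply/eqP; rewrite eq_sym -subr_eq0; apply/eqP; move: n.
apply: cancel_p => n.
rewrite cvBl cvZl cvA gcv.
rewrite (@cv_ext _ (sc m%:R genocchi) _ (sc m%:R (fun i => 1 + dl i))); last 2 first.
- by [].
- by move=> i; rewrite Scv // /sc /dl; case: i => [|i] /=; ring.
rewrite cv_sc gcv /t1; case: n => [|[|n]] /=; ring.
Qed.

Lemma gen0 : genocchi 0 = 0.
Proof. by rewrite /genocchi expr0 subrr mulr0 mul0r. Qed.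

Lemma F2d m n : odd m -> genocchi n.+1 =
  \sum_(k < n.+1) ('C(n.+1, k.+1))%:R * (m%:R) ^+ k * genocchi k.+1 * Sm m (n - k).
Proof.
move=> hm; have hm0 : (m%:R : rat) != 0 by rewrite pnatr_eq0; case: m hm.
apply: (mulfI hm0); rewrite F2 // /cv big_ord_recl /sc gen0 !mulr0 mul0r add0r mulr_sumr.
apply: eq_bigr => k _ /=; rewrite subSS exprS; ring.
Qed.

Lemma S0 m : odd m -> Sm m 0 = 1.
Proof.
move=> hm; have := @Scv m 0 hm; rewrite /cv big_ord1 /dl /= bin0 expr0 mul1r.
move=> h; have : Sm m 0 * 2 = 1 * 2.
  by have -> : (2 : rat) = 1 + 1 by []; rewrite h mul1r.
by move/mulIf; apply.
Qed.

Definition isint (x : rat) := exists z : int, x = z%:~R.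
Definition isO (x : rat) := exists (a : int) (d : nat), odd d /\ x * d%:R = a%:~R.

Lemma isint_z (z : int) : isint z%:~R. Proof. by exists z. Qed.
Lemma isint_n (k : nat) : isint k%:R. Proof. by exists k; rewrite pmulrn. Qed.
Lemma isintD x y : isint x -> isint y -> isint (x + y).
Proof. by move=> [a ->] [b ->]; exists (a + b); rewrite rmorphD. Qed.
Lemma isintM x y : isint x -> isint y -> isint (x * y).
Proof. by move=> [a ->] [b ->]; exists (a * b); rewrite rmorphM. Qed.
Lemma isintN x : isint x -> isint (- x).
Proof. by move=> [a ->]; exists (- a); rewrite rmorphN. Qed.
Lemma isintX x k : isint x -> isint (x ^+ k).
Proof. by move=> [a ->]; exists (a ^+ k); rewrite rmorphXn. Qed.
Lemma isint_sum (I : finType) (F : I -> rat) : (forall i, isint (F i)) -> isint (\sum_i F i).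
Proof.
move=> H; apply: (big_ind isint) => //; first by exists 0.
exact: isintD.
Qed.
Lemma isint_S m r : isint (Sm m r).
Proof.
apply: isint_sum => j; apply: isintM; apply: isintX.
  by apply: isintN; exact: (isint_n 1).
exact: isint_n.
Qed.

Lemma isO_i x : isint x -> isO x.
Proof. by move=> [a ->]; exists a, 1%N; rewrite mulr1. Qed.
Lemma isOD x y : isO x -> isO y -> isO (x + y).
Proof.
move=> [a [d [hd ha]]] [b [e [he hb]]]; exists (a * e%:Z + b * d%:Z), (d * e)%N.
split; first by rewrite oddM hd he.
rewrite natrM rmorphD !rmorphM /= !pmulrn -ha -hb; ring.
Qed.
Lemma isOM x y : isO x -> isO y -> isO (x * y).
Proof.
move=> [a [d [hd ha]]] [b [e [he hb]]]; exists (a * b), (d * e)%N.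
split; first by rewrite oddM hd he.
rewrite natrM rmorphM /= -ha -hb; ring.
Qed.
Lemma isO_sum (I : finType) (F : I -> rat) : (forall i, isO (F i)) -> isO (\sum_i F i).
Proof.
move=> H; apply: (big_ind isO) => //; first by apply: isO_i; exists 0.
exact: isOD.
Qed.
Lemma isO_div x e : isO (x * e%:R) -> odd e -> isO x.
Proof.
move=> [a [d [hd ha]]] he; exists a, (e * d)%N; split; first by rewrite oddM he hd.
by rewrite natrM mulrA.
Qed.

Lemma Gsum n : genocchi n = \sum_(k < n) ('C(n, k))%:R * 2 ^+ k * bernoulli k.
Proof.
have := dup n; rewrite cvDr cv_dl cv1 /sc => h.
have -> : \sum_(k < n) ('C(n, k))%:R * 2 ^+ k * bernoulli k =
  \sum_(k < n) ('C(n, k))%:R * (2 ^+ k * bernoulli k) by apply: eq_bigr => k _; rewrite mulrA.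
have -> : \sum_(k < n) ('C(n, k))%:R * (2 ^+ k * bernoulli k) =
   2 * bernoulli n - 2 ^+ n * bernoulli n - 2 ^+ n * bernoulli n by rewrite -h; ring.
rewrite /genocchi; ring.
Qed.

Lemma O2B n : isO (2 * bernoulli n).
Proof.
elim/ltn_ind: n => [[|n]] IH.
  by rewrite bern0 mulr1; apply: isO_i; exact: (isint_n 2).
apply: (@isO_div _ (2 ^ n.+1 - 1)).
  rewrite natrB ?expn_gt0 // natrX.
  have -> : 2 * bernoulli n.+1 * (2%:R ^+ n.+1 - 1) = - genocchi n.+1 by rewrite /genocchi; ring.
  rewrite Gsum -sumrN; apply: isO_sum => [[[|k] hk]] /=.
    by rewrite bern0 expr0 !mulr1; apply: isO_i; apply: isintN; exact: isint_n.
  have -> : - (('C(n.+1, k.+1))%:R * 2 ^+ k.+1 * bernoulli k.+1) =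
    (- ('C(n.+1, k.+1))%:R * 2 ^+ k) * (2 * bernoulli k.+1) by rewrite exprS; ring.
  apply: isOM; last by apply: IH.
  apply: isO_i; apply: isintM; first by apply: isintN; exact: isint_n.
  by apply: isintX; exact: (isint_n 2).
by rewrite oddB ?expn_gt0 // oddX.
Qed.

Lemma OG n : isO (genocchi n).
Proof.
have -> : genocchi n = (1 - 2 ^+ n) * (2 * bernoulli n) by rewrite /genocchi; ring.
apply: isOM; last exact: O2B.
apply: isO_i; apply: isintD; first exact: (isint_n 1).
by apply: isintN; apply: isintX; exact: (isint_n 2).
Qed.

Lemma intG n : isint (genocchi n).
Proof.
elim/ltn_ind: n => [[|[|n]]] IH.
- by rewrite gen0; exists 0.
- have := bern_rec 0; rewrite !big_ord_recr big_ord0 /= add0r bern0 => h.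
  have -> : genocchi 1 = 1.
    rewrite /genocchi expr1; move: h; rewrite bin0 bin1 mulr1 => h.
    lra.
  exact: (isint_n 1).
- have [a [d [hd ha]]] := OG n.+2.
  rewrite (@F2d d n.+1 hd) big_ord_recr /= subnn S0 // binn mul1r mulr1.
  apply: isintD.
    apply: isint_sum => [[k hk]] /=; apply: isintM; last exact: isint_S.
    apply: isintM; last by apply: IH.
    by apply: isintM; [exact: isint_n | apply: isintX; exact: isint_n].
  have -> : (d%:R : rat) ^+ n.+1 * genocchi n.+2 = d%:R ^+ n * (genocchi n.+2 * d%:R) by rewrite exprSr; ring.
  by rewrite ha; apply: isintM; [apply: isintX; exact: isint_n | exact: isint_z].
Qed.

Theorem proposition2 (n s p : nat) (hs : (1 <= s)%N) (hsn : (s <= n)%N)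
  (hp : prime p) (hodd : odd p) :
  exists z : int,
    genocchi n - \sum_(j < p) (-1) ^+ j * (j%:R : rat) ^+ (n - s) * Fp n s p j%:R
    = z%:~R * (p%:R : rat) ^+ s.
Proof.
case: n hsn => [|n] hsn; first by move: (leq_trans hs hsn).
pose T k := ('C(n.+1, k.+1))%:R * (p%:R : rat) ^+ k * genocchi k.+1 * Sm p (n - k).
have h1 : \sum_(j < p) (-1) ^+ j * (j%:R : rat) ^+ (n.+1 - s) * Fp n.+1 s p j%:R
    = \sum_(k < s) T k.
  rewrite /Fp.
  rewrite (eq_bigr (fun j : 'I_p => \sum_(k < s) (-1) ^+ j * (j%:R : rat) ^+ (n.+1 - s) *
     (('C(n.+1, k.+1))%:R * genocchi k.+1 * (p%:R) ^+ k * (j%:R) ^+ (s - 1 - k)))); last first.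
    by move=> j _; rewrite mulr_sumr.
  rewrite exchange_big /=; apply: eq_bigr => [[k hk]] _ /=.
  rewrite /T /Sm mulr_sumr; apply: eq_bigr => j _.
  have -> : (n - k = (n.+1 - s) + (s - 1 - k))%N by lia.
  rewrite exprD; ring.
have h2 : genocchi n.+1 = \sum_(k < n.+1) T k by rewrite (@F2d p n hodd).
have [z hz] : isint (\sum_(s <= k < n.+1) ('C(n.+1, k.+1))%:R * (p%:R : rat) ^+ (k - s)
                 * genocchi k.+1 * Sm p (n - k)).
  apply: (big_ind isint); [by exists 0 | exact: isintD |] => k _.
  apply: isintM; last exact: isint_S.
  apply: isintM; last exact: intG.
  by apply: isintM; [exact: isint_n | apply: isintX; exact: isint_n].
exists z; rewrite -hz mulr_suml h1 h2 -!(big_mkord xpredT T) (@big_cat_nat _ _ _ s) //=.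
rewrite addrC addrK; apply: eq_big_nat => k /andP [hk1 hk2].
rewrite /T; have -> : (p%:R : rat) ^+ k = p%:R ^+ (k - s) * p%:R ^+ s by rewrite -exprD subnK.
ring.
Qed.
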